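(* Let $\lambda>0$ and $d\ge3$. Then the function $C_\lambda(u_1,\dots,u_d)=\phi_\lambda^{[-1]}(\phi_\lambda(u_1)+\cdots+\phi_\lambda(u_d))$, $u_1,\dots,u_d\in[0,1]$, is not a $d$-dimensional copula.
   Context: For $\lambda\neq-1,0$, $\phi_\lambda(x)=\frac{1}{\lambda(\lambda+1)}(x^{\lambda+1}-x+\lambda(1-x))$ for $x\ge0$; for $\lambda>0$, $\phi_\lambda(0)=1/(\lambda+1)$ and $\phi_\lambda$ is convex and strictly decreasing on $[0,1]$ with $\phi_\lambda(1)=0$. The pseudoinverse is $\phi_\lambda^{[-1]}(t)=\phi_\lambda^{-1}(t)$ (inverse of $\phi_\lambda|_{[0,1]}$) for $0\le t<\phi_\lambda(0)$ and $\phi_\lambda^{[-1]}(t)=0$ for $t\ge\phi_\lambda(0)$. A $d$-dimensional copula is a joint CDF on $[0,1]^d$ with uniform $[0,1]$ margins. *)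

(* Defs.v *)
From HB Require Import structures.
From mathcomp Require Import all_boot all_order all_algebra.
From mathcomp Require Import all_classical all_reals all_analysis.
Set Implicit Arguments. Unset Strict Implicit. Unset Printing Implicit Defensive.
Import Order.TTheory GRing.Theory Num.Theory.
Import numFieldNormedType.Exports.
Local Open Scope classical_set_scope.
Local Open Scope ring_scope.

Definition phi {R : realType} (lam x : R) : R :=
  (x `^ (lam + 1) - x + lam * (1 - x)) / (lam * (lam + 1)).

Definition phi_pinv {R : realType} (lam t : R) : R :=
  if t < phi lam 0 then
    xget 0 [set x : R | 0 <= x <= 1 /\ phi lam x = t]
  else 0.

Definition Clam {R : realType} (lam : R) (d : nat) (u : 'I_d -> R) : R :=
  phi_pinv lam (\sum_(i < d) phi lam (u i)).

Definition is_copula {R : realType} {d : nat} (C : ('I_d -> R) -> R) : Prop :=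
  exists (dT : measure_display) (T : measurableType dT) (P : probability T R)
         (X : 'I_d -> T -> R),
    (forall i, measurable_fun setT (X i)) /\
    (forall i (t : R), 0 <= t <= 1 -> P [set w | X i w <= t] = t%:E) /\
    (forall u : 'I_d -> R, (forall i, 0 <= u i <= 1) ->
        P [set w | forall i, X i w <= u i] = (C u)%:E).

(* Main.v *)
Require Import Defs.
From HB Require Import structures.
From mathcomp Require Import all_boot all_order all_algebra.
From mathcomp Require Import all_classical all_reals all_analysis.
From mathcomp Require Import lra.
Import Order.TTheory GRing.Theory Num.Theory.
Import numFieldNormedType.Exports.
Local Open Scope ring_scope.
Local Open Scope classical_set_scope.

Lemma phi_cont (R : realType) (L w : R) : 0 < w ->
  {within `[w, 1], continuous (phi L)}.
Proof.
move=> w0.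
apply: continuous_in_subspaceT => y; rewrite inE /= in_itv /= => /andP[wy _].
have y0 : 0 < y by apply: lt_le_trans wy.
have hp : {for (y : R), continuous (fun z : R => z `^ (L+1))}.
  apply: differentiable_continuous; apply/derivable1_diffP.
  by apply: derivable_powR; rewrite in_itv/= andbT.
rewrite /phi.
suff H : {for (y : R), continuous (phi L)} by exact: H.
rewrite /phi.
apply: continuousM; last exact: cvg_cst.
apply: continuousD; last first.
  apply: continuousM; first exact: cvg_cst.
  apply: continuousB; [exact: cvg_cst | exact: cvg_id].
apply: continuousB => //; exact: cvg_id.
Qed.

Lemma key_num (R : realType) (L : R) : 0 < L ->
  exists x w : R,
  (0 < x /\ x <= 1) /\ (0 < w /\ w <= 1) /\ x < 3 * w /\
      0 <= phi L x /\ 2 * phi L x <= 3 * phi L w /\ phi L x <= phi L w /\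
      phi L 0 <= 2 * phi L w - phi L x.
Proof.
move=> L0.
set p := L + 1.
have p0 : 0 < p by rewrite /p; lra.
set k := (L * p)^-1.
have k0 : 0 < k by rewrite /k invr_gt0 mulr_gt0.
have phiE y : phi L y = (y `^ p - y + L * (1 - y)) * k by [].
set r := (5^-1 : R) `^ (L^-1).
have r0 : 0 < r by apply: powR_gt0; lra.
have r1 : r <= 1.
  rewrite /r -[X in _ <= X](powRr0 (5^-1 : R)); apply: ger_powR.
    by apply/andP; split; lra.
  by rewrite invr_ge0 ltW.
have rL : r `^ L = 5^-1.
  by rewrite /r -powRrM mulVf ?gt_eqF // powRr1 //; lra.
set x := L / p * r.
have Lp0 : 0 < L / p by rewrite divr_gt0.
have Lp1 : L / p <= 1 by rewrite ler_pdivrMr // mul1r /p; lra.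
have x0 : 0 < x by rewrite mulr_gt0.
have xp : x * p <= L.
  rewrite /x mulrAC divfK ?gt_eqF //; nra.
set q := x `^ L.
have q0 : 0 <= q by apply: powR_ge0.
have q5 : q <= 5^-1.
  have h : (L/p) `^ L <= 1.
    rewrite -[X in _ <= X](powRr0 (L/p)); apply: ger_powR; last exact: ltW.
    by apply/andP; split.
  have h0 : 0 <= (L/p) `^ L by apply: powR_ge0.
  rewrite /q /x powRM ?(ltW Lp0) ?(ltW r0) // rL; nra.
have xP : x `^ p = q * x.
  rewrite /p powRD ?(powRr1 (ltW x0)) //; apply/implyP => _; by rewrite gt_eqF.
set t := (2/5 : R) `^ p.
have t0 : 0 <= t by apply: powR_ge0.
have t1 : t <= 1.
  rewrite /t -[X in _ <= X](powRr0 (2/5 : R)); apply: ger_powR; last exact: ltW.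
  by apply/andP; split; lra.
set w := 2/5 * x.
have wP : w `^ p = t * (q * x).
  rewrite /w powRM ?(ltW x0) // xP //; lra.
have z0 : (0 : R) `^ p = 0 by rewrite powR0 // gt_eqF.
set Q := q * x.
have Q0 : 0 <= Q by rewrite /Q; nra.
have Q5 : Q <= x / 5 by rewrite /Q; nra.
set T := t * Q.
have T0 : 0 <= T by rewrite mulr_ge0.
have TQ : T <= Q by rewrite /T; nra.
set M := L * x.
have M0 : 0 <= M by rewrite /M; nra.
have xM : x + M <= L by move: xp; rewrite /M /p; lra.
have x1 : x <= 1 by rewrite /x; nra.
exists x, w; rewrite !phiE xP wP z0 -/Q -/T /w.
have -> : L * (1 - 2/5 * x) = L - 2/5 * M by rewrite /M; lra.
have -> : L * (1 - x) = L - M by rewrite /M; lra.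
(repeat split); try lra; try nra.
Qed.

Lemma phi1 (R : realType) (L : R) : phi L 1 = 0.
Proof. by rewrite /phi powR1 subrr add0r mulr0 mul0r. Qed.

Lemma key_points (R : realType) (L : R) : 0 < L ->
  exists x w a b : R,
  (0 < x /\ x <= 1) /\ (0 <= w /\ w <= 1) /\ x < 3 * w /\
  (0 <= a /\ a <= 1) /\ (0 <= b /\ b <= 1) /\ a <= b /\
  3 * phi L b = phi L x /\ phi L a + 2 * phi L b = phi L w /\
  phi L 0 <= 2 * phi L a + phi L b.
Proof.
move=> L0.
have [x [w [[x0 x1] [[w0 w1] [xw [Fx [Fxw [Fxw' F0]]]]]]]] := @key_num R L L0.
have Fw : 0 <= phi L w by lra.
have [a] : exists2 a, a \in `[w, 1]%R & phi L a = phi L w - 2/3 * phi L x.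
  apply: IVT; first exact: w1.
    exact: phi_cont.
  rewrite phi1 ge_min le_max; apply/andP; split; apply/orP; [right|left]; lra.
rewrite in_itv /= => /andP[wa a1] Fa.
have a0 : 0 < a by lra.
have [b] : exists2 b, b \in `[a, 1]%R & phi L b = phi L x / 3.
  apply: IVT; first exact: a1.
    exact: phi_cont.
  rewrite phi1 ge_min le_max; apply/andP; split; apply/orP; [right|left]; lra.
rewrite in_itv /= => /andP[ab b1] Fb.
exists x, w, a, b; rewrite Fa Fb; (repeat split); lra.
Qed.

Theorem theorem5 (R : realType) (lam : R) (d : nat) :
  0 < lam -> (3 <= d)%N -> ~ is_copula (@Clam R lam d).
Proof.
move=> L0 d3 [dT [T [P [X [mX [marg cdf]]]]]].
have [x [w [a [b [[x0 x1] [[w0 w1] [xw [[a0 a1] [[b0 b1] [ab [Fb [Fa F0]]]]]]]]]]]] :=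
  @key_points R lam L0.
have h0 : (0 < d)%N by apply: leq_trans d3.
have h1 : (1 < d)%N by apply: leq_trans d3.
pose i0 := Ordinal h0. pose i1 := Ordinal h1. pose i2 := Ordinal d3.
pose uv (c0 c1 c2 : R) : 'I_d -> R := fun k =>
  if k == i0 then c0 else if k == i1 then c1 else if k == i2 then c2 else 1.
have sumE c0 c1 c2 : \sum_(k < d) phi lam (uv c0 c1 c2 k)
    = phi lam c0 + phi lam c1 + phi lam c2.
  rewrite (bigD1 i0) // (bigD1 i1) // (bigD1 i2) //= big1.
    by rewrite /uv eqxx /= addr0 !addrA.
  move=> k /andP[/andP[k0 k1] k2]; rewrite /uv (negbTE k0) (negbTE k1) (negbTE k2).
  exact: phi1.
have uv01 c0 c1 c2 : 0 <= c0 <= 1 -> 0 <= c1 <= 1 -> 0 <= c2 <= 1 ->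
    forall k, 0 <= uv c0 c1 c2 k <= 1.
  move=> h0' h1' h2' k; rewrite /uv.
  case: (k == i0) => //=; case: (k == i1) => //=; case: (k == i2) => //=.
  by rewrite ler01 lexx.
pose Xs (u : 'I_d -> R) := [set om | forall i, X i om <= u i].
have mle i t : measurable [set om | X i om <= t].
  have -> : [set om | X i om <= t] = setT `&` X i @^-1` `]-oo, t]%classic.
    by apply/seteqP; split => om /=; rewrite in_itv /= ?andbT; [move=> h; split|case].
  exact: (mX i measurableT _ (measurable_itv _)).
have mXs u : measurable (Xs u).
  have -> : Xs u = \bigcap_(i in setT) [set om | X i om <= u i].
    by apply/seteqP; split => om /= h i; [move=> _|]; apply: h.
  by apply: fin_bigcap_measurable; [exact: finite_finset | move=> i _; exact: mle].
have hC c0 c1 c2 : 0 <= c0 <= 1 -> 0 <= c1 <= 1 -> 0 <= c2 <= 1 ->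
    P (Xs (uv c0 c1 c2)) = (phi_pinv lam (phi lam c0 + phi lam c1 + phi lam c2))%:E.
  move=> *; rewrite cdf /Clam; last exact: uv01.
  by congr (_%:E); congr phi_pinv; exact: sumE.
have hz t : phi lam 0 <= t -> phi_pinv lam t = 0.
  by move=> h; rewrite /phi_pinv ltNge h.
have i01 : (0 <= (1:R) <= 1) by rewrite ler01 lexx.
have ia : 0 <= a <= 1 by apply/andP.
have ib : 0 <= b <= 1 by apply/andP.
have ix : 0 <= x <= 1 by apply/andP; split => //; exact: ltW.
have iw : 0 <= w <= 1 by apply/andP.
pose cB := phi_pinv lam (phi lam x).
pose cS := phi_pinv lam (phi lam w).
have p1 := @phi1 R lam.
have cBx : cB <= x.
  have e : phi lam x + phi lam 1 + phi lam 1 = phi lam x by rewrite p1 !addr0.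
  have h := hC x 1 1 ix i01 i01; rewrite e in h.
  rewrite -lee_fin /cB -h -(marg i0 x ix).
  apply: le_measure; rewrite ?inE; [exact: mXs|exact: mle|].
  by move=> om hh; have := hh i0; rewrite /uv eqxx.
pose G := Xs (fun=> 1).
pose U := \big[setU/set0]_(k <- index_enum 'I_d) [set om | 1 < X k om].
have hU : measurable U /\ P U = 0.
  apply: (big_ind (fun A => measurable A /\ P A = 0)).
  - by split; [exact: measurable0 | exact: measure0].
  - move=> A B [mA pA] [mB pB]; split; [exact: measurableU | exact: null_set_setU].
  - move=> k _.
    have e : [set om | 1 < X k om] = ~` [set om | X k om <= 1].
      by apply/seteqP; split => om /=; rewrite ltNge => /negP.
    rewrite e; split; first exact/measurableC/mle.
    by rewrite probability_setC ?marg ?subee //; exact: mle.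
have PG : P (~` G) = 0.
  apply: (subset_measure0 _ hU.1 _ hU.2); first exact/measurableC/mXs.
  move=> om /= nG; rewrite /U -bigcup_seq.
  move/existsNP: nG => [k hk]; exists k; first exact: mem_index_enum.
  by rewrite /= ltNge; apply/negP.
have cSw : w <= cS.
  have e : phi lam w + phi lam 1 + phi lam 1 = phi lam w by rewrite p1 !addr0.
  have h := hC w 1 1 iw i01 i01; rewrite e in h.
  rewrite -lee_fin /cS -h -(marg i0 w iw).
  apply: (@le_trans _ _ (P (Xs (uv w 1 1) `|` ~` G))).
    apply: le_measure; rewrite ?inE; [exact: mle| |].
      by apply: measurableU; [exact: mXs | exact/measurableC/mXs].
    move=> om hw; case: (pselect (G om)) => g; [left => k | by right].
    rewrite /uv; case: (k =P i0) => [-> //|_].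
    by case: (k == i1) => /=; case: (k == i2) => /=; apply: g.
  by rewrite measureU0 //; exact/measurableC/mXs.
have subI u v m : (forall k, (u k <= m k) \/ (v k <= m k)) ->
    Xs u `&` Xs v `<=` Xs m.
  move=> hm om [hu hv] k; case: (hm k) => e.
    exact: le_trans (hu k) e.
  exact: le_trans (hv k) e.
have subS u v : (forall k, u k <= v k) -> Xs u `<=` Xs v.
  by move=> hm om hu k; exact: le_trans (hu k) (hm k).
pose S0 := Xs (uv a b b). pose S1 := Xs (uv b a b). pose S2 := Xs (uv b b a).
pose B := Xs (uv b b b).
have eS : phi lam w = phi lam a + phi lam b + phi lam b by lra.
have PS0 : P S0 = cS%:E by rewrite /S0 hC // /cS eS.
have PS1 : P S1 = cS%:E.
  by rewrite /S1 hC // /cS; congr (_%:E); congr phi_pinv; lra.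
have PS2 : P S2 = cS%:E.
  by rewrite /S2 hC // /cS; congr (_%:E); congr phi_pinv; lra.
have eB : phi lam x = phi lam b + phi lam b + phi lam b by lra.
have PB : P B = cB%:E by rewrite /B hC // /cB eB.
have z1 : phi lam 0 <= phi lam a + phi lam a + phi lam b by lra.
have z2 : phi lam 0 <= phi lam a + phi lam b + phi lam a by lra.
have z3 : phi lam 0 <= phi lam b + phi lam a + phi lam a by lra.
have N01 : P (S0 `&` S1) = 0.
  apply: (subset_measure0 _ (mXs (uv a a b))).
  - by apply: measurableI; exact: mXs.
  - apply: (subI (uv a b b) (uv b a b)) => k; rewrite /uv; case: (k == i0) => /=; first by left.
    by case: (k == i1) => /=; [right | left].
  - by have := hC _ _ _ ia ia ib; rewrite hz //; apply.
have N02 : P (S0 `&` S2) = 0.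
  apply: (subset_measure0 _ (mXs (uv a b a))).
  - by apply: measurableI; exact: mXs.
  - apply: (subI (uv a b b) (uv b b a)) => k; rewrite /uv; case: (k == i0) => /=; first by left.
    by case: (k == i1) => /=; [left | right].
  - by have := hC _ _ _ ia ib ia; rewrite hz //; apply.
have N12 : P (S1 `&` S2) = 0.
  apply: (subset_measure0 _ (mXs (uv b a a))).
  - by apply: measurableI; exact: mXs.
  - apply: (subI (uv b a b) (uv b b a)) => k; rewrite /uv; case: (k == i0) => /=; first by left.
    by case: (k == i1) => /=; [left | right].
  - by have := hC _ _ _ ib ia ia; rewrite hz //; apply.
have m0 : measurable S0 by exact: mXs.
have m1 : measurable S1 by exact: mXs.
have m2 : measurable S2 by exact: mXs.
have U01 : P (S0 `|` S1) = (cS + cS)%:E.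
  rewrite measureUfinl //; last exact: (eq_ind_r (fun v => v < +oo)%E (ltry cS) PS0).
  transitivity (cS%:E + cS%:E - 0)%E; last by rewrite sube0 EFinD.
  by congr (_ + _ - _)%E; [exact: PS0 | exact: PS1 | exact: N01].
have N3 : P ((S0 `|` S1) `&` S2) = 0.
  apply: (subset_measure0 _ (measurableU _ _ (measurableI _ _ m0 m2) (measurableI _ _ m1 m2))).
  - by apply: measurableI => //; exact: measurableU.
  - by rewrite setIUl.
  - exact: (null_set_setU (measurableI _ _ m0 m2) (measurableI _ _ m1 m2) N02 N12).
have U012 : P (S0 `|` S1 `|` S2) = (cS + cS + cS)%:E.
  rewrite measureUfinl //; first last.
  - exact: (eq_ind_r (fun v => v < +oo)%E (ltry (cS + cS)) U01).
  - exact: measurableU.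
  transitivity ((cS + cS)%:E + cS%:E - 0)%E; last by rewrite sube0 EFinD.
  by congr (_ + _ - _)%E; [exact: U01 | exact: PS2 | exact: N3].
have key : cS + cS + cS <= cB.
  rewrite -lee_fin -PB -U012; apply: le_measure; rewrite ?inE.
  - by apply: measurableU => //; exact: measurableU.
  - exact: mXs.
  - have le k : uv a b b k <= uv b b b k /\ uv b a b k <= uv b b b k /\
        uv b b a k <= uv b b b k.
      rewrite /uv; case: (k == i0) => /=; first by rewrite ab !lexx.
      case: (k == i1) => /=; first by rewrite ab !lexx.
      by case: (k == i2) => /=; rewrite ?ab !lexx.
    move=> om [[h|h]|h]; apply: (subS _ _ _ om h) => k; have := le k; tauto.
lra.
Qed.
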